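(* Let $q>1$, let $\chi_q$ be a real Dirichlet character modulo $q$, and let $\tilde\chi_q$ be any modified character associated with $\chi_q$. Then for every integer $k\ge1$ there exists $n\in\mathbb{N}\cup\{0\}$ such that $$\sum_{m=1}^{k}\tilde\chi_q(n+m)\ \ge 0,$$ equivalently $\#\{1\le m\le k:\tilde\chi_q(n+m)=-1\}\le k/2$. In particular $\delta(k)\le k/2$ for all $k\ge1$.
   Context: For an integer $q>1$ and a real-valued (i.e. $\{0,\pm1\}$-valued) Dirichlet character $\chi_q$ modulo $q$ (principal or not), a modified character $\tilde\chi_q$ is the completely multiplicative function $\mathbb{N}\to\{+1,-1\}$ defined on primes by $\tilde\chi_q(p)=\chi_q(p)$ if $p\nmid q$, and $\tilde\chi_q(p)=\eta(p)$ if $p\mid q$, where $\eta(p)\in\{+1,-1\}$ is an arbitrary choice of sign for each prime $p\mid q$. Here $\delta(k)$ denotes the supremum, over all $q>1$, all real characters $\chi_q$ mod $q$ and all sign choices $\eta$, of $\min_{n\ge0}\#\{1\le m\le k:\tilde\chi_q(n+m)=-1\}$. *)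

(* Defs.v *)
From mathcomp Require Import all_boot all_order all_algebra.
Set Implicit Arguments. Unset Strict Implicit. Unset Printing Implicit Defensive.
Import Order.TTheory GRing.Theory Num.Theory.
Local Open Scope ring_scope.

Definition real_dirichlet_char (q : nat) (chi : nat -> int) : Prop :=
  [/\ forall n, chi n = 0 \/ chi n = 1 \/ chi n = -1,
      forall m n, chi (m * n)%N = chi m * chi n,
      forall n, chi (n + q)%N = chi n &
      forall n, (chi n = 0) <-> ~~ coprime n q].

(* f : N_{>=1} -> {+1,-1} is a modified character associated with chi:
   completely multiplicative, f p = chi p for primes p not dividing q, and
   f p = eta p in {+1,-1} (arbitrary) for primes p dividing q. *)
Definition modified_char (q : nat) (chi : nat -> int) (f : nat -> int) : Prop :=
  [/\ forall n, (0 < n)%N -> f n = 1 \/ f n = -1,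
      f 1%N = 1,
      forall m n, (0 < m)%N -> (0 < n)%N -> f (m * n)%N = f m * f n &
      forall p, prime p -> ~~ (p %| q)%N -> f p = chi p].

(* Main.v *)
Require Import Defs.
From mathcomp Require Import all_boot all_order all_algebra.
From mathcomp Require Import zify ring lra.
From Stdlib Require Import Classical.
Import Order.TTheory GRing.Theory Num.Theory.
Local Open Scope ring_scope.

Definition Gd (f : nat -> int) (n : nat) : int :=
  \sum_(0 <= d < n.+1 | (d %| n)%N) f d.
Definition Ad (f : nat -> int) (p n : nat) : int :=
  \sum_(0 <= d < n.+1 | ((d %| n) && ~~ (p %| d))%N) f d.

Lemma sum_trunc (F : nat -> int) (P : pred nat) y B :
  (forall a, P a -> (a <= y)%N) -> (y < B)%N ->
  \sum_(0 <= a < B | P a) F a = \sum_(0 <= a < y.+1 | P a) F a.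
Proof.
move=> HP hyB.
rewrite (big_cat_nat _ (n:=y.+1)) //= [X in _ + X]big_nat_cond [X in _ + X]big1 ?addr0 //.
move=> a /andP[/andP[Ha _] Pa]; have := HP a Pa; rewrite leqNgt Ha //.
Qed.

Lemma sum_cond_le (F : nat -> int) x y : (y <= x)%N ->
  \sum_(1 <= a < x.+1) (if (a <= y)%N then F a else 0) = \sum_(1 <= a < y.+1) F a.
Proof.
move=> hyx.
rewrite (big_cat_nat _ (n:=y.+1)) //= [X in _ + X]big_nat_cond [X in _ + X]big1 ?addr0.
  by apply: eq_big_nat => a /andP[_ Ha]; rewrite -ltnS Ha.
by move=> a /andP[/andP[Ha _] _]; rewrite leqNgt Ha.
Qed.

Lemma sum_div (c : int) d x : (0 < d)%N ->
  \sum_(1 <= n < x.+1) (if (d %| n)%N then c else 0) = c *+ (x %/ d).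
Proof.
move=> hd; elim: x => [|x IH]; first by rewrite big_geq // div0n.
rewrite big_nat_recr //= IH divnS // mulrnDr addrC.
by case: (d %| x.+1)%N => //=; rewrite addr0.
Qed.

Lemma sum_mult (F : nat -> int) p B : (0 < p)%N ->
  \sum_(0 <= d < p * B | (p %| d)%N) F d = \sum_(0 <= e < B) F (p * e)%N.
Proof.
move=> hp; elim: B => [|B IH]; first by rewrite muln0 !big_geq.
rewrite mulnSr (big_cat_nat _ (n:=(p*B)%N)) //= ?leq_addr // IH big_nat_recr //=.
congr (_ + _).
rewrite big_ltn_cond; last by rewrite -{1}[(p*B)%N]addn0 ltn_add2l.
rewrite (dvdn_mulr _ (dvdnn p)) big_nat_cond [X in _ + X]big1 ?addr0 //.
move=> i /andP[/andP[h1 h2] hd].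
have hd2 : (p %| i - p * B)%N by rewrite dvdn_sub // (dvdn_mulr _ (dvdnn p)).
have hle := dvdn_leq (eqbRL (subn_gt0 _ _) h1) hd2.
move: h2 hle; lia.
Qed.
Lemma G_pm (f : nat -> int) p m :
  (forall a b, (0 < a)%N -> (0 < b)%N -> f (a * b)%N = f a * f b) ->
  prime p -> (0 < m)%N -> Gd f (p * m) = Ad f p (p * m) + f p * Gd f m.
Proof.
move=> hmul pp hm; have hp := prime_gt0 pp.
rewrite /Gd (bigID (fun d => p %| d)%N) /= addrC /Ad; apply: f_equal2 => //.
have hpm : (0 < p * m)%N by rewrite muln_gt0 hp.
rewrite -(@sum_trunc _ _ (p * m)%N (p * m.+1)%N); last 2 first.
- by move=> a /andP[ha _]; apply: dvdn_leq.
- by rewrite mulnS -{1}[(p * m)%N]add0n ltn_add2r.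
rewrite (eq_bigl _ _ (fun d => andbC (d %| p * m)%N (p %| d)%N)).
rewrite big_mkcondr (@sum_mult (fun i => if (i %| p * m)%N then f i else 0)) // mulr_sumr.
rewrite [RHS]big_mkcond; apply: eq_big_nat => e _.
rewrite dvdn_pmul2l //.
case: e => [|e]; first by rewrite dvd0n; case: (m) hm.
by case: ifP => // _; rewrite hmul.
Qed.

Lemma A_pm (f : nat -> int) p m : prime p -> (0 < m)%N -> Ad f p (p * m) = Ad f p m.
Proof.
move=> pp hm; have hp := prime_gt0 pp.
rewrite /Ad -[RHS](@sum_trunc _ _ m (p * m).+1).
- apply: eq_bigl => d; case hpd: (p %| d)%N; rewrite ?andbF ?andbT //.
  have cop : coprime d p by rewrite coprime_sym prime_coprime // hpd.
  by rewrite Gauss_dvdr.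
- by move=> a /andP[ha _]; apply: dvdn_leq.
- by rewrite ltnS leq_pmull.
Qed.

Lemma A_pow (f : nat -> int) p r j : prime p -> (0 < r)%N -> Ad f p (p ^ j * r) = Ad f p r.
Proof.
move=> pp hr; elim: j => [|j IH]; first by rewrite expn0 mul1n.
rewrite expnS -mulnA A_pm // muln_gt0 expn_gt0 prime_gt0 //.
Qed.

Lemma A_G (f : nat -> int) p r : ~~ (p %| r)%N -> Ad f p r = Gd f r.
Proof.
move=> hpr; rewrite /Ad /Gd; apply: eq_bigl => d.
case hd: (d %| r)%N => //=; apply/negP => hpd; case/negP: hpr.
exact: dvdn_trans hpd hd.
Qed.

Lemma G1 (f : nat -> int) : f 1%N = 1 -> Gd f 1 = 1.
Proof.
by move=> h; rewrite /Gd big_mkcond !big_nat_recr //= big_geq // h add0r ?addr0.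
Qed.

Lemma G_ge0 (f : nat -> int) :
  (forall n, (0 < n)%N -> f n = 1 \/ f n = -1) -> f 1%N = 1 ->
  (forall a b, (0 < a)%N -> (0 < b)%N -> f (a * b)%N = f a * f b) ->
  forall n, (0 < n)%N -> 0 <= Gd f n.
Proof.
move=> hpm h1 hmul n; elim/ltn_ind: n => n IH hn.
case: (ltngtP n 1) => [|hn1|->]; first by case: n hn {IH}.
2: by rewrite G1.
set p := pdiv n; have pp : prime p by apply: pdiv_prime.
have [r cop defn] := pfactor_coprime pp hn.
have hr : (0 < r)%N by move: hn; rewrite defn muln_gt0 => /andP[].
have hpr : ~~ (p %| r)%N by rewrite -prime_coprime.
have hj : (0 < logn p n)%N.
  by rewrite logn_gt0 mem_primes pp hn pdiv_dvd.
have hrn : (r < n)%N.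
  rewrite defn -{1}[r]muln1 ltn_mul2l hr /= -(expn0 p) ltn_exp2l ?prime_gt1 //.
have Gr := IH r hrn hr.
have key : forall j, 0 <= Gd f (p ^ j * r) /\ (f p = -1 -> Gd f (p ^ j * r) <= Gd f r).
  elim=> [|j [IH1 IH2]]; first by rewrite expn0 mul1n.
  have hpj : (0 < p ^ j * r)%N by rewrite muln_gt0 expn_gt0 prime_gt0.
  rewrite expnS -mulnA (G_pm f p (p ^ j * r)) // A_pm // A_pow // A_G //.
  case: (hpm p (prime_gt0 pp)) => hfp; rewrite hfp.
    by split; [rewrite mul1r addr_ge0 | move=> /eqP; rewrite -subr_eq0 opprK].
  have := IH2 hfp; split=> [|_]; lia.
by rewrite defn mulnC; case: (key (logn p n)).
Qed.

Definition Tsum (f : nat -> int) (y : nat) : int := \sum_(1 <= a < y.+1) f a.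

Lemma dirichlet (f : nat -> int) x :
  \sum_(1 <= n < x.+1) Gd f n = \sum_(1 <= m < x.+1) Tsum f (x %/ m).
Proof.
have L : \sum_(1 <= n < x.+1) Gd f n = \sum_(0 <= d < x.+1) f d *+ (x %/ d).
  rewrite (eq_big_nat _ _ (F2 := fun n => \sum_(0 <= d < x.+1) (if (d %| n)%N then f d else 0))); last first.
    move=> n /andP[hn hnx]; rewrite /Gd -big_mkcond.
    rewrite (@sum_trunc _ _ n x.+1) //; by move=> a; apply: dvdn_leq.
  rewrite exchange_big_nat; apply: eq_big_nat => d _.
  case: d => [|d]; last by rewrite sum_div.
  rewrite divn0 mulr0n big_nat_cond big1 // => n /andP[/andP[hn _] _].
  by rewrite dvd0n; case: n hn.
have R : \sum_(1 <= m < x.+1) Tsum f (x %/ m) = \sum_(1 <= a < x.+1) f a *+ (x %/ a).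
  rewrite (eq_big_nat _ _ (F2 := fun m => \sum_(1 <= a < x.+1) (if (a <= x %/ m)%N then f a else 0))); last first.
    by move=> m _; rewrite /Tsum sum_cond_le // leq_div.
  rewrite exchange_big_nat; apply: eq_big_nat => a /andP[ha _].
  rewrite (eq_big_nat _ _ (F2 := fun m => if (m <= x %/ a)%N then f a else 0)); last first.
    move=> m /andP[hm _]; rewrite !leq_divRL // mulnC //.
  by rewrite sum_cond_le ?leq_div // sumr_const_nat subn1.
rewrite L R big_ltn // divn0 mulr0n add0r //.
Qed.

Lemma window_eq (f : nat -> int) n k :
  \sum_(n.+1 <= a < (n + k).+1) f a = \sum_(1 <= m < k.+1) f (n + m)%N.
Proof.
rewrite -[n.+1]add1n big_addn.
have -> : ((n + k).+1 - n = k.+1)%N by lia.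
by apply: eq_big_nat => i _; rewrite addnC.
Qed.

Lemma Tb (f : nat -> int) k : (0 < k)%N ->
  (forall n, (0 < n)%N -> f n <= 1) ->
  (forall n, \sum_(1 <= m < k.+1) f (n + m)%N < 0) ->
  forall q r, Tsum f (q * k + r) <= r%:Z - q%:Z.
Proof.
move=> hk hle H; elim=> [|q IH] r.
  rewrite mul0n add0n subr0 /Tsum.
  apply: (le_trans (ler_sum_nat (G := fun _ => 1) _)).
    by move=> i /andP[hi _]; apply: hle.
  by rewrite sumr_const_nat subn1 /= -natz.
have -> : (q.+1 * k + r = (q * k + r) + k)%N by rewrite mulSn; lia.
rewrite /Tsum (big_cat_nat _ (n := (q * k + r).+1)); last 2 first.
  by [].
  by rewrite ltnS leq_addr.
rewrite (window_eq f (q * k + r) k); have := H (q * k + r)%N; have := IH r; rewrite /Tsum.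
move=> h1 h2; have hw : \sum_(1 <= m < k.+1) f (q * k + r + m)%N <= -1.
  by rewrite -ltzD1 addNr.
apply: le_trans (lerD h1 hw) _.
by rewrite -addn1 PoszD opprD addrA.
Qed.

Definition Dn (y : nat) : nat := \sum_(1 <= m < y.+1) y %/ m.

Lemma D2 y : (2 * Dn y + y <= Dn (2 * y))%N.
Proof.
rewrite /Dn [X in (_ <= X)%N](big_cat_nat _ (n := y.+1)) //=; last by lia.
apply: leq_add.
  rewrite big_distrr /=; apply: leq_sum => m _.
  case: m => [|m]; first by rewrite !divn0.
  by rewrite leq_divRL // -mulnA leq_mul2l leq_divM orbT.
apply: (@leq_trans (\sum_(y.+1 <= m < (2 * y).+1) 1%N)).
  by rewrite sum_nat_const_nat muln1; lia.
rewrite big_nat_cond [X in (_ <= X)%N]big_nat_cond; apply: leq_sum => m /andP[/andP[h1 h2] _].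
by rewrite divn_gt0 //; lia.
Qed.

Lemma Dpow j : (j * 2 ^ j <= 2 * Dn (2 ^ j))%N.
Proof.
elim: j => [|j IH] //.
have := D2 (2 ^ j); rewrite -expnS expnS; nia.
Qed.

Lemma mulrn_Posz (a b : nat) : (Posz a) *+ b = Posz (a * b).
Proof. by rewrite -mulr_natr PoszM natz. Qed.

Theorem mainTheorem2 (q : nat) (chi f : nat -> int) :
  (1 < q)%N -> real_dirichlet_char q chi -> modified_char q chi f ->
  forall k : nat, (1 <= k)%N ->
    exists n : nat, 0 <= \sum_(1 <= m < k.+1) f (n + m)%N.
Proof.
move=> hq hchi [hpm h1 hmul _] k hk.
apply: NNPP => Hne.
have H : forall n, \sum_(1 <= m < k.+1) f (n + m)%N < 0.
  by move=> n; rewrite ltNge; apply/negP => h; apply: Hne; exists n.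
have hle : forall n, (0 < n)%N -> f n <= 1.
  by move=> n hn; case: (hpm n hn) => ->.
have Tbd : forall y, Tsum f y <= (k - 1)%N%:Z - (y %/ k)%N%:Z.
  move=> y; have := @Tb f k hk hle H (y %/ k) (y %% k); rewrite -divn_eq.
  have := ltn_pmod y hk; lia.
set Y := (2 ^ (2 * k * k))%N.
have hY : (0 < Y)%N by rewrite expn_gt0.
set x := (k * Y)%N.
have S1 : 0 <= \sum_(1 <= n < x.+1) Gd f n.
  rewrite big_nat_cond; apply: sumr_ge0 => n /andP[/andP[hn _] _].
  exact: G_ge0.
have S2 : \sum_(1 <= m < x.+1) Tsum f (x %/ m) <=
    ((k - 1) * x)%N%:Z - (\sum_(1 <= m < x.+1) (x %/ m %/ k))%N%:Z.
  apply: le_trans (ler_sum_nat (G := fun m => (k - 1)%N%:Z - (x %/ m %/ k)%N%:Z) _) _.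
    by move=> m _; apply: Tbd.
  rewrite sumrB sumr_const_nat subn1 mulrn_Posz /=.
  by rewrite subn1 /= -(big_morph Posz PoszD (erefl (Posz 0))).
have N1 : (Dn Y <= \sum_(1 <= m < x.+1) (x %/ m %/ k))%N.
  rewrite (eq_big_nat _ _ (F2 := fun m => (Y %/ m)%N)); last first.
    by move=> m _; rewrite -divnMA /x mulnC divnMr.
  rewrite /Dn [X in (_ <= X)%N](big_cat_nat _ (n := Y.+1)) //=; last by rewrite /x; nia.
  exact: leq_addr.
have hD := Dpow (2 * k * k).
have hfin : ((k - 1) * (k * Y) < Dn Y)%N.
  move: hD; rewrite -/Y; nia.
rewrite dirichlet in S1.
have := le_trans S1 S2; rewrite /x; lia.
Qed.
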